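(* Let $x=(x_1,\ldots,x_n)$ and $y=(y_1,\ldots,y_m)$ be observed samples, let $\mathbb{P}^{x,y}$ be the posterior distribution of $(P_1,P_2)$ given $\mathcal{D}_{n,m}=\{x,y\}$, with expectation $\mathbb{E}^{x,y}$. Let $d$ be a distance between probability measures, $M=\sup_{P_1,P_2}d(P_1,P_2)\in(0,\infty]$, $w:[0,M)\to(0,\infty]$ a probability density on $[0,M)$ with cumulative distribution function $W$, and $\mathrm{WIKS}(\mathcal{D}_{n,m})=\int_0^M w(\varepsilon)\,\mathbb{P}^{x,y}(d(P_1,P_2)>\varepsilon)\,d\varepsilon$. Consider testing $H_0:P_1=P_2$ with decision space $\{0,1\}$ ($0$ = accept $H_0$, $1$ = reject $H_0$) and loss function $$L((P_1,P_2),a)=\begin{cases} c_0\,W(d(P_1,P_2)), & a=0,\\ c_1\,[1-W(d(P_1,P_2))], & a=1,\end{cases}$$ where $c_0,c_1>0$. Then the Bayes rule (the decision minimizing the posterior expected loss $\mathbb{E}^{x,y}[L((P_1,P_2),a)]$) is to reject $H_0$ if and only if $$\mathrm{WIKS}(\mathcal{D}_{n,m})>c,\qquad c=\frac{c_1}{c_1+c_0}.$$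
   Context: Bayesian two-sample setting: $(P_1,P_2)$ is a random pair of probability distributions with some prior; conditionally on $(P_1,P_2)$, $x$ is an i.i.d. sample from $P_1$ and $y$ an i.i.d. sample from $P_2$, independently. *)

(* Defs.v *)
From HB Require Import structures.
From mathcomp Require Import all_boot all_order all_algebra.
From mathcomp Require Import all_classical all_reals all_analysis measurable_realfun.
Set Implicit Arguments. Unset Strict Implicit. Unset Printing Implicit Defensive.
Import Order.TTheory GRing.Theory Num.Theory.
Local Open Scope classical_set_scope.
Local Open Scope ring_scope.
Local Open Scope ereal_scope.

Definition supp0M (R : realType) (M : \bar R) : set R :=
  [set x : R | (0 <= x)%R /\ x%:E < M].

Definition cdfW (R : realType) (M : \bar R) (w : R -> \bar R) (t : R) : \bar R :=
  \int[lebesgue_measure]_(x in `[0%R, t] `&` supp0M M) w x.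

Definition WIKS (R : realType) (d0 : measure_display) (Theta : measurableType d0)
  (post : probability Theta R) (dist : Theta -> R) (M : \bar R) (w : R -> \bar R)
  : \bar R :=
  \int[lebesgue_measure]_(e in supp0M M) (w e * post [set th | (e < dist th)%R]).

(* Loss function L(theta, a), a = false (accept H0) / true (reject H0). *)
Definition loss (R : realType) (c0 c1 : R) (M : \bar R) (w : R -> \bar R)
  (dist_th : R) (a : bool) : \bar R :=
  if a then c1%:E * (1 - cdfW M w dist_th) else c0%:E * cdfW M w dist_th.

Definition post_risk (R : realType) (d0 : measure_display) (Theta : measurableType d0)
  (post : probability Theta R) (dist : Theta -> R) (c0 c1 : R) (M : \bar R)
  (w : R -> \bar R) (a : bool) : \bar R :=
  \int[post]_th loss c0 c1 M w (dist th) a.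

(* Main.v *)
Require Import Defs.
From HB Require Import structures.
From mathcomp Require Import all_boot all_order all_algebra.
From mathcomp Require Import all_classical all_reals all_analysis measurable_realfun.
From mathcomp Require Import lra.
Import Order.TTheory GRing.Theory Num.Theory.
Local Open Scope classical_set_scope.
Local Open Scope ring_scope.
Local Open Scope ereal_scope.
Lemma supp_meas (R : realType) (M : \bar R) : 0 < M -> measurable (supp0M M).
Proof.
case: M => [r _| _|//].
- rewrite (_ : supp0M _ = `[0%R, r[%classic); first exact: measurable_itv.
  by apply/seteqP; split => x /=; rewrite in_itv /= ?lte_fin => /andP//.
- rewrite (_ : supp0M _ = `[0%R, +oo[%classic); first exact: measurable_itv.
  apply/seteqP; split => x /=; rewrite in_itv /= ?ltry ?andbT.
  by case. by move=> h; split=> //; rewrite ltry.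
Qed.

Theorem theorem3 (R : realType) (d0 : measure_display) (Theta : measurableType d0)
  (post : probability Theta R) (dist : Theta -> R) (M : \bar R)
  (w : R -> \bar R) (c0 c1 : R) :
  measurable_fun setT dist ->
  (forall th, (0 <= dist th)%R) ->
  M = ereal_sup (range (fun th => (dist th)%:E)) ->
  0 < M ->
  measurable_fun (supp0M M) (w : R -> \bar R) ->
  (forall x, supp0M M x -> 0 < w x) ->
  \int[lebesgue_measure]_(x in supp0M M) w x = 1 ->
  (0 < c0)%R -> (0 < c1)%R ->
  (post_risk post dist c0 c1 M w true < post_risk post dist c0 c1 M w false
   <-> (c1 / (c1 + c0))%:E < WIKS post dist M w).
Proof.
move=> mdist dist0 Mdef M0 mw w0 w1 c00 c10.
set S := supp0M M.
have mS : measurable S by exact: supp_meas.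
set fw := w \_ S.
have mfw : measurable_fun setT fw by exact/(measurable_restrictT _ _).1.
have fw0 x : 0 <= fw x.
  rewrite /fw patchE; case: ifPn => [/set_mem Sx|_ //]; exact/ltW/w0.
set E := [set p : R * Theta | (p.1 < dist p.2)%R].
have mE : measurable E.
  have mh : measurable_fun setT (fun p : R * Theta => dist p.2 - p.1)%R.
    apply: measurable_funB; last exact: measurable_fst.
    exact: measurableT_comp mdist measurable_snd.
  have := mh measurableT _ (measurable_itv `]0%R, +oo[).
  rewrite setTI; congr measurable; apply/seteqP; split => p /=;
    by rewrite in_itv /= andbT subr_gt0.
set g := fun p : R * Theta => fw p.1 * (\1_E p)%:E.
have mg : measurable_fun setT g.
  apply: emeasurable_funM; first exact: measurableT_comp mfw measurable_fst.
  exact/measurable_EFinP/measurable_indic.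
have g0 p : 0 <= g p by apply: mule_ge0 => //; rewrite lee_fin.
have FT := @fubini_tonelli _ _ _ _ _ lebesgue_measure post g mg g0.
set H := fun th => \int[lebesgue_measure]_e g (e, th).
have mH : measurable_fun setT H.
  exact: (@measurable_fun_fubini_tonelli_G _ _ _ _ _ lebesgue_measure g mg g0).
have HW th : cdfW M w (dist th) = H th.
  rewrite /cdfW.
  have -> : `[0%R, dist th] `&` S = `]-oo, dist th] `&` S.
    apply/seteqP; split => x /= [].
      by rewrite !in_itv /= => /andP[_ ->].
    by rewrite !in_itv /= => -> [x0 xM]; split => //; rewrite x0.
  rewrite integral_mkcondr -integral_itv_bndo_bndc; last first.
    exact: measurable_funTS.
  rewrite integral_mkcond /H; apply: eq_integral => e _.
  rewrite /g patchE /E /= indicE.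
  have -> : (e \in `]-oo, dist th[%classic) = (e < dist th)%R.
    apply/idP/idP => [/set_mem|h]; first by rewrite /= in_itv.
    by apply/mem_set; rewrite /= in_itv.
  have -> : ((e, th) \in [set p : R * Theta | (p.1 < dist p.2)%R]) = (e < dist th)%R.
    by apply/idP/idP => [/set_mem//|h]; apply/mem_set.
  by case: ifPn => _; rewrite ?mule1 ?mule0.
have inner e : \int[post]_y g (e, y) = fw e * post [set th | (e < dist th)%R].
  have mA : measurable [set th | (e < dist th)%R].
    have := mdist measurableT _ (measurable_itv `]e, +oo[).
    rewrite setTI; congr measurable; apply/seteqP; split => p /=;
      by rewrite in_itv /= andbT.
  transitivity (\int[post]_y (fw e * (\1_[set th | (e < dist th)%R] y)%:E)).
    by apply: eq_integral => y _.
  rewrite ge0_integralZl //; last exact/measurable_EFinP/measurable_indic.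
  by rewrite integral_indic // setIT.
have WI : WIKS post dist M w = \int[lebesgue_measure]_e \int[post]_y g (e, y).
  rewrite /WIKS integral_mkcond; apply: eq_integral => e _.
  by rewrite inner /fw !patchE; case: ifPn => _ //; rewrite mul0e.
have H0 th : 0 <= H th by apply: integral_ge0 => e _.
have H1 th : H th <= 1.
  rewrite -w1 integral_mkcond /H; apply: ge0_le_integral => //.
  - exact: (measurable_fun_pair1 th mg).
  - move=> e _; rewrite /g indicE; case: (_ \in _); rewrite ?mule1 ?mule0 //.
have Hfin th : H th \is a fin_num.
  by rewrite ge0_fin_numE // (le_lt_trans (H1 th)) // ltry.
set A := \int[post]_th H th.
have A0 : 0 <= A by apply: integral_ge0 => th _.
have A1 : A <= 1.
  rewrite /A (_ : 1 = \int[post]_th (cst 1) th); last first.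
    rewrite integral_cst // mul1e. have P1 := @probability_setT _ _ _ post. by rewrite -P1.
  by apply: ge0_le_integral => // th _; exact: H1.
have AW : WIKS post dist M w = A by rewrite WI FT.
have m1H : measurable_fun setT (fun th => 1 - H th).
  exact: emeasurable_funB.
have IB : \int[post]_th (1 - H th) = 1 - A.
  have : \int[post]_th ((1 - H th) + H th) = \int[post]_th (1 - H th) + A.
    by rewrite ge0_integralD // => th _; rewrite sube_ge0 ?Hfin.
  under eq_integral do rewrite subeK ?Hfin //.
  rewrite (_ : \int[post]_th 1 = 1); last first.
    by rewrite -[LHS]/(\int[post]_th (cst 1) th) integral_cst // mul1e; exact: probability_setT.
  move=> h; rewrite [in RHS]h addeK //.
  by rewrite ge0_fin_numE // (le_lt_trans A1) // ltry.
have RT : post_risk post dist c0 c1 M w true = c1%:E * (1 - A).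
  rewrite /post_risk /loss -IB -ge0_integralZl //;
    try (by move=> th _; rewrite sube_ge0 ?Hfin); try (by rewrite lee_fin ltW).
  by apply: eq_integral => th _; rewrite HW.
have RF : post_risk post dist c0 c1 M w false = c0%:E * A.
  rewrite /post_risk /loss -ge0_integralZl //; try (by rewrite lee_fin ltW).
  by apply: eq_integral => th _; rewrite HW.
rewrite RT RF AW.
have Afin : A \is a fin_num by rewrite ge0_fin_numE // (le_lt_trans A1) // ltry.
rewrite -(fineK Afin); move: A0 A1; rewrite -(fineK Afin) !lee_fin.
set a := fine A => a0 a1.
rewrite -EFinB -!EFinM !lte_fin ltr_pdivrMr; last by rewrite addr_gt0.
split => h; nra.
Qed.
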